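(* Let $\Sigma=\{c_1\prec c_2\prec\dots\prec c_\sigma\}$, let $n\ge1$ and nonnegative integers $n_c$ ($c\in\Sigma$) with $\sum_c n_c=n-1$ be given, and let $\mathcal U$, $\mathcal M$, $f$ be as in the context. A binary matrix $M\in\mathcal M$ belongs to $f(\mathcal U)$ if and only if its associated sequence $\mathcal L$ is a Łukasiewicz path.
   Context: A trie over a finite totally ordered alphabet $\Sigma$ of size $\sigma$ is a rooted ordered tree with edges labeled by symbols of $\Sigma$ such that edges leaving the same node have distinct labels and siblings are ordered by their incoming labels. For a node $u$, $out(u)\subseteq\Sigma$ is the set of labels of edges leaving $u$. $\mathcal U$ is the set of tries with $n$ nodes over $\Sigma$ in which exactly $n_c$ edges are labeled $c$, for each $c$. $\mathcal M$ is the set of all $\sigma\times n$ binary matrices $M$ such that, for every $i\in[\sigma]$, row $i$ of $M$ contains exactly $n_{c_i}$ ones. The map $f:\mathcal U\to\mathcal M$ sends a trie with nodes $u_1,\dots,u_n$ listed in pre-order (children visited in increasing label order) to the matrix $M$ with $M[i][j]=1$ iff $c_i\in out(u_j)$. For $M\in\mathcal M$, define integer sequences of length $n$ by $\mathcal D[i]=(\text{number of ones in column } i \text{ of } M)-1$ and $\mathcal L[i]=\sum_{j=1}^i\mathcal D[j]$. A Łukasiewicz path is an integer sequence $\mathcal L[1..n]$ with $\mathcal L[n]=-1$ and, for every $i\in[n-1]$, $\mathcal L[i]\ge 0$ and $\mathcal L[i+1]-\mathcal L[i]\ge -1$. *)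

(* Defs.v *)
From HB Require Import structures.
From mathcomp Require Import all_boot all_order all_algebra.
Set Implicit Arguments. Unset Strict Implicit. Unset Printing Implicit Defensive.
Import Order.TTheory GRing.Theory Num.Theory.

(* Alphabet Sigma = {c_1 < ... < c_sigma} is represented by 'I_sigma
   (c_{i+1} is the ordinal i), ordered by the natural order. *)

Inductive trie (sigma : nat) : Type :=
  Node : seq ('I_sigma * trie sigma) -> trie sigma.

Arguments Node {sigma}.

Definition children {sigma} (t : trie sigma) : seq ('I_sigma * trie sigma) :=
  let: Node cs := t in cs.

Definition out {sigma} (t : trie sigma) : seq 'I_sigma := map fst (children t).

Fixpoint wf_trie {sigma} (t : trie sigma) : bool :=
  let: Node cs := t in
  sorted (fun a b : 'I_sigma => (a < b)%N) (map fst cs) &&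
  (fix aux (l : seq ('I_sigma * trie sigma)) : bool :=
     match l with [::] => true | (_, u) :: l' => wf_trie u && aux l' end) cs.

(* Pre-order list of nodes (children visited in list order, which for
   well-formed tries is increasing label order). *)
Fixpoint preorder {sigma} (t : trie sigma) : seq (trie sigma) :=
  let: Node cs := t in
  t :: (fix aux (l : seq ('I_sigma * trie sigma)) : seq (trie sigma) :=
          match l with [::] => [::] | (_, u) :: l' => preorder u ++ aux l' end) cs.

Definition edge_count {sigma} (t : trie sigma) (c : 'I_sigma) : nat :=
  \sum_(u <- preorder t) (c \in out u).

Definition in_U {sigma} (n : nat) (cnt : 'I_sigma -> nat) (t : trie sigma) : Prop :=
  [/\ wf_trie t, size (preorder t) = n & forall c, edge_count t c = cnt c].

Definition in_M {sigma n} (cnt : 'I_sigma -> nat) (M : 'M[bool]_(sigma, n)) : Prop :=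
  forall i : 'I_sigma, \sum_(j < n) (M i j : nat) = cnt i.

Definition f_trie {sigma} (n : nat) (t : trie sigma) : 'M[bool]_(sigma, n) :=
  \matrix_(i < sigma, j < n) (i \in out (nth (Node [::]) (preorder t) j)).

(* D[j] (0-indexed column j, i.e. paper's D[j+1]) *)
Definition Dseq {sigma n} (M : 'M[bool]_(sigma, n)) (j : 'I_n) : int :=
  (\sum_(i < sigma) (M i j : nat))%:Z - 1.

(* L[k] = sum_{j=1}^k D[j], for k = 1..n (paper's 1-based indexing) *)
Definition Lseq {sigma n} (M : 'M[bool]_(sigma, n)) (k : nat) : int :=
  \sum_(j < n | (j < k)%N) Dseq M j.

Definition lukasiewicz (n : nat) (L : nat -> int) : Prop :=
  L n = (-1)%R /\
  forall i : nat, (1 <= i <= n - 1)%N -> (0 <= L i)%R /\ (-1 <= L i.+1 - L i)%R.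

(* Main.v *)
Require Import Defs.
From mathcomp Require Import all_boot all_order all_algebra zify.
Import GRing.Theory Num.Theory.

Section Aux.
Variable sigma : nat.

Lemma trie_ind2 (P : trie sigma -> Prop) :
  (forall cs, (forall p, List.In p cs -> P p.2) -> P (Node cs)) -> forall t, P t.
Proof.
move=> H; fix F 1 => -[cs]; apply: H.
exact: (fix G (l : seq ('I_sigma * trie sigma)) : forall p, List.In p l -> P p.2 :=
  match l with
  | [::] => fun p (Hp : List.In p [::]) => False_ind _ Hp
  | (a, u) :: l' => fun p Hp =>
      match Hp with
      | or_introl e => eq_ind (a, u) (fun q => P q.2) (F u) p e
      | or_intror h => G l' p h
      end
  end) cs.
Qed.

Lemma wf_NodeE (cs : seq ('I_sigma * trie sigma)) :
  wf_trie (Node cs) = sorted (fun a b : 'I_sigma => (a < b)%N) (map fst cs)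
     && all (fun p => wf_trie p.2) cs.
Proof. rewrite /=; congr (_ && _); by elim: cs => //= [[a u] l ->]. Qed.

Lemma preorder_NodeE (cs : seq ('I_sigma * trie sigma)) :
  preorder (Node cs) = Node cs :: flatten (map (fun p => preorder p.2) cs).
Proof. rewrite /=; congr (_ :: _); by elim: cs => //= [[a u] l ->]. Qed.

End Aux.

Fixpoint valid (m : nat) (ds : seq nat) : bool :=
  match ds with [::] => m == 0 | d :: ds' => (0 < m) && valid (m.-1 + d) ds' end.

Section S.
Variable sigma : nat.
Definition degs (t : trie sigma) := map (fun u => size (out u)) (preorder t).

Lemma valid_tree (t : trie sigma) : forall m rest,
  valid m.+1 (degs t ++ rest) = valid m rest.
Proof.
elim/trie_ind2: t => cs IH m rest.
rewrite /degs preorder_NodeE /= size_map /= map_flatten -map_comp.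
elim: cs IH m => [|p cs IHc] IH m /=; first by rewrite addn0.
rewrite addnS -catA.
have -> : (fun x => [seq size (out u) | u <- preorder x.2]) p = degs p.2 by [].
rewrite (IH p (or_introl erefl)) IHc // => q Hq; exact: IH q (or_intror Hq).
Qed.

Lemma valid_split (T : Type) (g : T -> nat) (s : seq T) : forall k m,
  valid (k + m) (map g s) -> exists s1 s2, [/\ s = s1 ++ s2, valid k (map g s1) & valid m (map g s2)].
Proof.
elim: s => [|x s IH] k m /=.
  move=> /eqP; case: k => // ; case: m => // _; by exists [::], [::].
case: k => [|k].
  move=> H; exists [::], (x :: s); split=> //=.
move=> /andP [_ H].
have E : ((k.+1 + m).-1 + g x = (k + g x) + m)%N by lia.
rewrite E in H.
have [s1 [s2 [-> H1 H2]]] := IH _ _ H.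
by exists (x :: s1), s2; split=> //=.
Qed.

Definition ltO := (fun a b : 'I_sigma => (a < b)%N).

Lemma build N : forall (ls : seq (seq 'I_sigma)), (size ls <= N)%N ->
  all (sorted ltO) ls -> forall m, valid m (map size ls) ->
  exists ts : seq (trie sigma), [/\ size ts = m, all wf_trie ts &
     flatten (map (fun t => map out (preorder t)) ts) = ls].
Proof.
elim: N => [|N IH] ls.
  rewrite leqn0 => /nilP -> _ m /= /eqP ->; by exists [::].
move=> Hs Hall [|m].
  case: ls Hs Hall => [|l ls] //= _ _ _; by exists [::].
rewrite -add1n => /valid_split [s1 [s2 [Els H1 H2]]].
case: s1 Els H1 => [|l s1] // Els /= H1.
rewrite Els all_cat /= in Hall; move: Hall => /andP[/andP[Hl Hs1] Hs2].
rewrite Els size_cat /= in Hs.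
have [cs [Ecs Wcs Fcs]] := IH s1 ltac:(lia) Hs1 _ H1.
have [ts [Ets Wts Fts]] := IH s2 ltac:(lia) Hs2 _ H2.
exists (Node (zip l cs) :: ts); split.
- by rewrite /= Ets.
- apply/andP; split; last exact: Wts; rewrite wf_NodeE.
  have -> : map fst (zip l cs) = l by rewrite -/(unzip1 _) unzip1_zip // Ecs.
  rewrite Hl /=.
  have E : unzip2 (zip l cs) = cs by rewrite unzip2_zip // Ecs.
  by move: Wcs; rewrite -{1}E all_map.
- rewrite map_cons preorder_NodeE map_cons /= Els Fts.
  have -> : out (Node (zip l cs)) = l by rewrite /out /= -/(unzip1 _) unzip1_zip // Ecs.
  congr (_ :: _); change (map out (flatten [seq preorder p.2 | p <- zip l cs]) ++ s2 = s1 ++ s2); congr (_ ++ _).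
  have -> : [seq preorder p.2 | p <- zip l cs] = map preorder (unzip2 (zip l cs)).
    by rewrite /unzip2 -map_comp.
  by rewrite unzip2_zip ?Ecs // -Fcs map_flatten -map_comp.
Qed.
End S.

Definition psum (ds : seq nat) (k : nat) : int :=
  (\sum_(0 <= j < k) ((nth 0 ds j)%:Z - 1))%R.

Lemma psum0 ds : psum ds 0 = 0%R.
Proof. by rewrite /psum big_geq. Qed.

Lemma psum_cons d ds k : psum (d :: ds) k.+1 = ((d%:Z - 1) + psum ds k)%R.
Proof. by rewrite /psum big_nat_recl. Qed.

Lemma psumS ds k : psum ds k.+1 = (psum ds k + ((nth 0 ds k)%:Z - 1))%R.
Proof. by rewrite /psum big_nat_recr. Qed.

Lemma valid_iff ds : forall m, valid m ds <->
  ((m%:Z + psum ds (size ds) = 0)%R /\ forall k, (k < size ds)%N -> (0 < m%:Z + psum ds k)%R).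
Proof.
elim: ds => [|d ds IH] m /=.
  rewrite psum0; split; first by move=> /eqP ->.
  by case=> H _; apply/eqP; lia.
split.
  move=> /andP [Hm /IH [H1 H2]]; split.
    rewrite psum_cons; move: H1; lia.
  case=> [|k] Hk; first by rewrite psum0; lia.
  rewrite psum_cons; have := H2 k Hk; lia.
case=> H1 H2; apply/andP; split.
  by have := H2 0%N erefl; rewrite psum0; lia.
have Hm : (0 < m)%N by have := H2 0%N erefl; rewrite psum0; lia.
apply/IH; split.
  by move: H1; rewrite psum_cons; lia.
move=> k Hk; have := H2 k.+1 Hk; rewrite psum_cons; lia.
Qed.

Lemma luk_valid n (ds : seq nat) (L : nat -> int) : size ds = n -> (1 <= n)%N ->
  (forall k, (k <= n)%N -> L k = psum ds k) -> lukasiewicz n L <-> valid 1 ds.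
Proof.
move=> Hs Hn HL; rewrite valid_iff Hs; split.
  case=> HLn Hi; split; first by rewrite -HL // HLn.
  case=> [|k] Hk; first by rewrite psum0.
  have [H _] := Hi k.+1 ltac:(lia); rewrite -HL; [lia | lia].
case=> H1 H2; split; first by rewrite HL //; lia.
move=> i Hi; rewrite !HL; [|lia|lia]; split.
  have := H2 i ltac:(lia); lia.
rewrite psumS; lia.
Qed.

Section M.
Variables (sigma n : nat) (M : 'M[bool]_(sigma, n)).

Definition cl := [seq [seq i <- enum 'I_sigma | M i j] | j <- enum 'I_n].

Lemma size_cl : size cl = n.
Proof. by rewrite size_map size_enum_ord. Qed.

Lemma nth_cl (j : 'I_n) : nth [::] cl j = [seq i <- enum 'I_sigma | M i j].
Proof. by rewrite (nth_map j) ?size_enum_ord // nth_ord_enum. Qed.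

Lemma size_col (j : 'I_n) : size [seq i <- enum 'I_sigma | M i j] = (\sum_(i < sigma) (M i j : nat))%N.
Proof.
rewrite size_filter -sum1_count big_mkcond /= enumT.
by apply: eq_bigr => i _; case: (M i j).
Qed.

Lemma Lseq_psum k : (k <= n)%N -> Lseq M k = psum (map size cl) k.
Proof.
move=> Hk; rewrite /Lseq /psum (big_nat_widen _ _ _ _ _ Hk) big_mkord.
apply: eq_bigr => j _.
by rewrite (nth_map [::]) ?size_cl // nth_cl size_col /Dseq.
Qed.

Lemma sorted_cl : all (sorted (ltO sigma)) cl.
Proof.
apply/allP => s /mapP [j _ ->]; apply: sorted_filter; first exact: ltn_trans.
have := iota_ltn_sorted 0 sigma; by rewrite -val_enum_ord sorted_map.
Qed.

End M.
Arguments cl {sigma n} M.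
Arguments sorted_cl {sigma n} M.

Lemma wf_preorder sigma (t : trie sigma) : wf_trie t -> all wf_trie (preorder t).
Proof.
elim/trie_ind2: t => cs IH Hw; rewrite preorder_NodeE; apply/andP; split => //.
move: Hw; rewrite wf_NodeE => /andP [_].
elim: cs IH => [|p cs IHc] IH // /andP [Hp Hcs].
change (all wf_trie (preorder p.2 ++ flatten (map (fun p => preorder p.2) cs))).
rewrite all_cat (IH p (or_introl erefl) Hp) /=.
apply: IHc Hcs => q Hq; exact: IH q (or_intror Hq).
Qed.

Lemma sorted_out sigma (u : trie sigma) : wf_trie u -> sorted (ltO sigma) (out u).
Proof. by case: u => cs; rewrite wf_NodeE => /andP []. Qed.

Theorem lemma2 (sigma n : nat) (cnt : 'I_sigma -> nat)
  (Hn : (1 <= n)%N) (Hsum : (\sum_(c < sigma) cnt c)%N = (n - 1)%N)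
  (M : 'M[bool]_(sigma, n)) (HM : in_M cnt M) :
  (exists t : trie sigma, in_U n cnt t /\ f_trie n t = M) <-> lukasiewicz n (Lseq M).
Proof.
have Hs : size (map size (cl M)) = n by rewrite size_map size_cl.
rewrite (@luk_valid n _ (Lseq M) Hs Hn (@Lseq_psum _ _ M)).
split.
  case=> t [[Hwf Hsz Hcnt] Hf].
  have E : map out (preorder t) = cl M.
    apply: (eq_from_nth (x0 := [::])); first by rewrite size_map size_cl.
    rewrite size_map Hsz => j Hj.
    rewrite (nth_map (Node [::])) ?Hsz // -[j]/(nat_of_ord (Ordinal Hj)) nth_cl.
    apply: (irr_sorted_eq (leT := ltO sigma)).
    - exact: ltn_trans.
    - exact: ltnn.
    - apply: sorted_out; move/(all_nthP (Node [::])): (@wf_preorder _ t Hwf); apply; by rewrite Hsz.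
    - rewrite -nth_cl; apply: (all_nthP [::] (sorted_cl M)); by rewrite size_cl.
    - move=> i; rewrite mem_filter mem_enum andbT -Hf mxE //.
  suff: valid 1 (@degs _ t) by rewrite /degs -E -map_comp.
  by rewrite -(cats0 (@degs _ t)) valid_tree.
move=> Hv.
have [ts [Ets Wts Fts]] := @build sigma _ (cl M) (leqnn _) (sorted_cl M) 1 Hv.
case: ts Ets Wts Fts => [|t [|]] //= _ /andP [Hwf _]; rewrite cats0 => E.
exists t; split; first split.
- exact: Hwf.
- by rewrite -(size_map out) E size_cl.
- move=> c; rewrite /edge_count -HM.
  rewrite -(big_map out predT (fun s => nat_of_bool (c \in s))) E big_map enumT.
  by apply: eq_bigr => j _; rewrite mem_filter mem_enum andbT.
- apply/matrixP => i j; rewrite mxE.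
  rewrite -(nth_map (Node [::]) [::]); last by rewrite -(size_map out) E size_cl.
  by rewrite E nth_cl mem_filter mem_enum andbT.
Qed.
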